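(* Let $q$ be an exponential factor, $L=\mathrm{Levels}(q)=\{k_1>\dots>k_m\}$ and $K=\mathrm{slope}(q)$. Then there are homeomorphisms $$\mathbf B(q)\cong(\mathbb C^* )^m\times\mathbb C^N,\qquad \mathbf{SB}(q)\cong(\mathbb C^* )^m\times\mathbb C^M,$$ where $N=|\mathrm{Inc}(L)\cap(0,K]|$ and $M=|\mathrm{Inc}(L)\setminus\mathbb N|$. In particular $\dim\mathbf B(q)=|A(L)\cap(0,K]|$ and $$\dim\mathbf{SB}(q)=|A(L)\setminus\mathbb N|=\sum_{i=1}^m\big(r_ik_i-\lfloor r_{i-1}k_i\rfloor\big),$$ with $r_0=1$ and $r_i$ the lcm of the denominators of $k_1,\dots,k_i$.
   Context: Exponential factors: finite sums $q=\sum_k a_kx^k$, $a_k\in\mathbb C$, $k\in\mathbb Q_{>0}$ (i.e. elements of $\bigcup_{r\ge1}x^{1/r}\mathbb C[x^{1/r}]$). $\mathrm{slope}(q)$ = largest exponent with nonzero coefficient ($0$ if $q=0$); $\mathrm{ram}(q)$ = least $r\ge1$ with $q\in x^{1/r}\mathbb C[x^{1/r}]$. Galois operator $\sigma(\sum a_kx^k)=\sum a_ke^{-2\pi\sqrt{-1}k}x^k$; $\langle q\rangle=\{\sigma^i(q)\}$ has $\mathrm{ram}(q)$ elements. $\mathrm{Levels}(q)=\{\mathrm{slope}(q-\sigma^i(q)):i\in\mathbb Z\}\setminus\{0\}$. Admissible exponents: for $L=\{k_1>\dots>k_m\}\subset\mathbb Q_{>0}$ let $r_i$ be the lcm of the denominators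 (in lowest terms) of $k_1,\dots,k_i$, $A(L)=\mathbb N_{>0}\cup\bigcup_{i=1}^m\big((0,k_i]\cap\tfrac1{r_i}\mathbb N\big)$, and $\mathrm{Inc}(L)=A(L)\setminus L$. Configuration spaces: for a pointed irregular type $Q=[(n_1,q_1),\dots,(n_m,q_m)]$ (with $n_i\in\mathbb N_{>0}$, $q_i$ in distinct Galois orbits), let $r=\mathrm{lcm}_i\mathrm{ram}(q_i)$, $K=\max_i\mathrm{slope}(q_i)$, $s=rK$, and for $\mathbf a=(a_{i,j})\in\mathbb C^{ms}$ set $Q_{\mathbf a}=[(n_i,\sum_{j=1}^sa_{i,j}x^{j/r})]_{i=1}^m$. Then $\mathbf B(Q)=\{\mathbf a\in\mathbb C^{ms}:Q_{\mathbf a}\sim Q\}$ (subspace topology), where $Q'\sim Q$ means same multiplicities and $\mathrm{slope}(\sigma^k(q'_i)-\sigma^l(q'_j))=\mathrm{slope}(\sigma^k(q_i)-\sigma^l(q_j))$ for all $i,j$ and $0\le k\le\mathrm{ram}(q_i)$, $0\le l\le\mathrm{ram}(q_j)$. $\mathbf{SB}(Q)=\{\mathbf a\in\mathbf B(Q):\mathrm{Tr}(Q_{\mathbf a})=0\}$, where the trace is the sum $\sum_i n_i\sum_{t=0}^{\mathrm{ram}(q_i)-1}\sigma^t(q_i)$ of all entries of the associated full list. Here $\mathbf B(q):=\mathbf B([(1,q)])$, $\mathbf{SB}(q):=\mathbf{SB}([(1,q)])$. *)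

(* Defs.v *)
From HB Require Import structures.
From mathcomp Require Import all_boot all_order all_algebra.
From mathcomp Require Import all_classical all_reals all_analysis.
From mathcomp Require Import complex.
Set Implicit Arguments.
Unset Strict Implicit.
Unset Printing Implicit Defensive.
Import Order.TTheory GRing.Theory Num.Theory.
Import numFieldNormedType.Exports.
Local Open Scope classical_set_scope.
Local Open Scope ring_scope.

Notation Cplx R := (R[i] : numClosedFieldType).

Section ExpFactors.
Variable R : realType.
Local Notation C := (Cplx R).

(* An exponential factor  q = sum_k q(k) x^k  is encoded by its coefficient
   function  q : rat -> C  together with a finite list S of positive rationals
   containing its support. *)
Definition expfactor_on (S : seq rat) (q : rat -> C) : Prop :=
  (forall k, q k != 0 -> k \in S) /\ (forall k, k \in S -> 0 < k).

(* slope of a finite sum f whose support is contained in S: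
   largest exponent with nonzero coefficient, 0 if f = 0. *)
Definition slope_in (S : seq rat) (f : rat -> C) : rat :=
  \big[Num.max/0]_(k <- S | f k != 0) k.

(* q belongs to x^{1/r} C[x^{1/r}] *)
Definition in_ram (S : seq rat) (q : rat -> C) (r : nat) : bool :=
  (0 < r)%N && all (fun k => (q k != 0) ==> ((r%:R * k : rat) \is a Num.nat)) S.

(* ram(q) = least r >= 1 with q in x^{1/r} C[x^{1/r}] *)
Definition ram (S : seq rat) (q : rat -> C) : nat :=
  match pselect (exists r, in_ram S q r) with
  | left h => ex_minn h
  | right _ => 1%N
  end.

(* e^{-2 pi sqrt(-1) k} *)
Definition galfactor (k : rat) : C :=
  Complex (cos (2 * pi * ratr k)) (- sin (2 * pi * ratr k)).

Definition sigma_pow (i : int) (f : rat -> C) : rat -> C :=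
  fun k => galfactor k ^ i * f k.

Definition fdiff (f g : rat -> C) : rat -> C := fun k => f k - g k.

(* Levels(q) = { slope(q - sigma^i q) : i in Z } \ {0} *)
Definition is_Level (S : seq rat) (q : rat -> C) (x : rat) : Prop :=
  x != 0 /\ exists i : int, x = slope_in S (fdiff q (sigma_pow i q)).

(* configuration-space data for q: r = ram q, K = slope q, s = r K *)
Definition cK (S : seq rat) (q : rat -> C) : rat := slope_in S q.
Definition cs (S : seq rat) (q : rat -> C) : nat :=
  Num.truncn ((ram S q)%:R * cK S q).

(* the grid of exponents j/r, 1 <= j <= s *)
Definition grid (r s : nat) : seq rat := [seq (j.+1)%:R / r%:R | j <- iota 0 s].

(* q_a = sum_{j=1}^s a_j x^{j/r} *)
Definition qa (r s : nat) (a : 'rV[C]_s) : rat -> C :=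
  fun k => \sum_(j < s) (if k == (j.+1)%:R / r%:R then a 0 j else 0).

(* q_a ~ q (single component, multiplicity 1) *)
Definition equiv_q (S : seq rat) (q : rat -> C) (a : 'rV[C]_(cs S q)) : Prop :=
  let r := ram S q in let s := cs S q in
  forall k l : nat, (k <= r)%N -> (l <= r)%N ->
    slope_in (grid r s) (fdiff (sigma_pow k (qa r a)) (sigma_pow l (qa r a)))
    = slope_in S (fdiff (sigma_pow k q) (sigma_pow l q)).

Definition Bq (S : seq rat) (q : rat -> C) : set 'rV[C]_(cs S q) :=
  [set a | @equiv_q S q a].

(* Tr(q_a) = sum_{t < ram(q_a)} sigma^t(q_a) *)
Definition trace_zero (r s : nat) (a : 'rV[C]_s) : Prop :=
  forall k : rat,
    \sum_(t < ram (grid r s) (qa r a)) sigma_pow t (qa r a) k = 0.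

Definition SBq (S : seq rat) (q : rat -> C) : set 'rV[C]_(cs S q) :=
  [set a | @equiv_q S q a /\ trace_zero (ram S q) a].

(* (C^* )^m x C^n, realised as the subset of C^(m+n) whose first m
   coordinates are nonzero *)
Definition CstarC (m n : nat) : set 'rV[C]_(m + n) :=
  [set v | forall i : 'I_(m + n), (i < m)%N -> v 0 i != 0].

End ExpFactors.
Arguments equiv_q {R} S q a.
Arguments Bq {R} S q _ : assert.
Arguments SBq {R} S q _ : assert.
Arguments CstarC : clear implicits.

Definition homeomorphic {X Y : topologicalType} (A : set X) (B : set Y) : Prop :=
  exists (f : X -> Y) (g : Y -> X),
    [/\ (forall x, A x -> B (f x)), (forall y, B y -> A (g y)),
        (forall x, A x -> g (f x) = x), (forall y, B y -> f (g y) = y)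
      & ({within A, continuous f} /\ {within B, continuous g})].

Definition is_card (P : rat -> bool) (n : nat) : Prop :=
  exists s : seq rat, [/\ uniq s, (forall x, (x \in s) = P x) & size s = n].

(* r_i = lcm of the denominators of k_1, ..., k_i  (r_0 = 1) *)
Definition rden (ks : seq rat) (i : nat) : nat :=
  foldr lcmn 1%N [seq `|denq k|%N | k <- take i ks].

(* A(L), for L = ks = [k_1 > ... > k_m] *)
Definition inA (ks : seq rat) (x : rat) : bool :=
  (0 < x) && ((x \is a Num.nat) ||
    [exists i : 'I_(size ks),
       (x <= nth 0 ks i) && (((rden ks i.+1)%:R * x : rat) \is a Num.nat)]).

Definition inInc (ks : seq rat) (x : rat) : bool := inA ks x && (x \notin ks).

(* Main.v *)
Require Import Defs.
From HB Require Import structures.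
From mathcomp Require Import all_boot all_order all_algebra.
From mathcomp Require Import all_classical all_reals all_analysis.
From mathcomp Require Import complex.
From mathcomp Require Import ring lra zify.
Set Implicit Arguments.
Unset Strict Implicit.
Unset Printing Implicit Defensive.
Import Order.TTheory GRing.Theory Num.Theory.
Import numFieldNormedType.Exports.
Local Open Scope classical_set_scope.
Local Open Scope ring_scope.
Section Trig.
Variable R : realType.
Local Notation C := (Cplx R).
Definition E (t : R) : C := Complex (cos t) (- sin t).
Lemma EM a b : E a * E b = E (a + b).
Proof.
rewrite /E /GRing.mul /=. congr Complex; rewrite ?cosD ?sinD; ring.
Qed.
Lemma E0 : E 0 = 1.
Proof. by rewrite /E cos0 sin0 oppr0. Qed.
Lemma E_neq0 a : E a != 0.
Proof.
apply/negP=> /eqP h; have := EM a (- a); rewrite h mul0r subrr E0 => /eqP.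
by rewrite eq_sym oner_eq0.
Qed.
Lemma EN a : (E a)^-1 = E (- a).
Proof.
apply: (mulfI (E_neq0 a)); rewrite mulfV ?E_neq0 // EM subrr E0 //.
Qed.
Lemma Eexpn a (n : nat) : E a ^+ n = E (n%:R * a).
Proof.
elim: n => [|n IH]; first by rewrite expr0 mul0r E0.
by rewrite exprS IH EM -nat1r mulrDl mul1r.
Qed.
Lemma Eexpz a (n : int) : E a ^ n = E (n%:~R * a).
Proof.
case: n => n; first by rewrite -exprnP Eexpn.
by rewrite NegzE -invr_expz -exprnP Eexpn EN intrN mulNr.
Qed.
Lemma E2pi : E (2 * pi) = 1.
Proof.
by rewrite /E mulr_natl cos2pi sin2pi oppr0.
Qed.
Lemma cos_eq1 (x : R) : 0 <= x < 1 -> cos (2 * pi * x) = 1 -> x = 0.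
Proof.
move=> /andP[x0 x1] hc.
have pi0 := pi_gt0 R.
have h0 : 0 <= 2 * pi * x by rewrite mulr_ge0 // mulr_ge0 // pi_ge0.
have [hle|hlt] := leP (2 * pi * x) pi.
  have := @cos_inj R (2 * pi * x) 0.
  rewrite !in_itv /= h0 hle lexx pi_ge0 hc cos0 => /(_ isT isT erefl) /eqP.
  by rewrite !mulf_eq0 pnatr_eq0 (gt_eqF pi0) /= => /eqP.
exfalso.
have hu : cos (2 * pi - 2 * pi * x) = 1.
  have c2 : cos (2 * pi) = 1 :> R by rewrite mulr_natl cos2pi.
  have s2 : sin (2 * pi) = 0 :> R by rewrite mulr_natl sin2pi.
  by rewrite cosB c2 s2 hc mul0r addr0 mulr1.
have h1 : 0 <= 2 * pi - 2 * pi * x by nra.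
have h2 : 2 * pi - 2 * pi * x <= pi by nra.
have := @cos_inj R (2 * pi - 2 * pi * x) 0.
rewrite !in_itv /= h1 h2 lexx pi_ge0 hu cos0 => /(_ isT isT erefl) h.
nra.
Qed.
Lemma E_eq1 (x : R) : (E (2 * pi * x) == 1) = (x \is a Num.int).
Proof.
apply/idP/idP.
  move=> /eqP hE.
  pose n := Num.floor x.
  have hf : E (2 * pi * (x - n%:~R)) = 1.
    by rewrite mulrBr -EM hE mul1r -mulrN mulrC -intrN -Eexpz E2pi exp1rz.
  have hc : cos (2 * pi * (x - n%:~R)) = 1.
    by move: hf => /eqP; rewrite eq_complex /= => /andP[/eqP -> _].
  have hx : 0 <= x - n%:~R < 1.
    have := floor_itv x; rewrite -/n intrD => /andP[h1 h2].
    by apply/andP; split; [rewrite subr_ge0 | rewrite ltrBlDl].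
  have := cos_eq1 hx hc => /eqP; rewrite subr_eq0 => /eqP ->.
  exact: rpred_int.
move=> /intrP[n ->].
by rewrite mulrC -Eexpz E2pi exp1rz.
Qed.
End Trig.

Lemma ratr_intE (R : realType) (y : rat) :
  (ratr y \is a @Num.int R) = (y \is a Num.int).
Proof.
by rewrite !intrEfloor floor_rat -ratr_int (inj_eq (fmorph_inj _)).
Qed.

Lemma gal_expz (R : realType) (k : rat) (i : int) :
  @galfactor R k ^ i = E (2 * pi * ratr (i%:~R * k)).
Proof.
rewrite /galfactor -/(E _) Eexpz; congr (E _).
by rewrite rmorphM /= ratr_int mulrCA.
Qed.

Lemma gal_neq0 (R : realType) (k : rat) : @galfactor R k != 0.
Proof. exact: E_neq0. Qed.

Lemma gal_eq (R : realType) (k : rat) (i j : int) :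
  (@galfactor R k ^ i == @galfactor R k ^ j) = ((i - j)%:~R * k \is a Num.int).
Proof.
have h0 := gal_neq0 R k.
have -> : @galfactor R k ^ i = @galfactor R k ^ (i - j) * @galfactor R k ^ j.
  by rewrite -expfzDr // subrK.
rewrite -{2}[@galfactor R k ^ j]mul1r (inj_eq (mulIf _)); last first.
  by rewrite expfz_eq0 negb_and h0 orbT.
by rewrite gal_expz E_eq1 ratr_intE.
Qed.

Definition sspec (P : rat -> bool) (v : rat) : Prop :=
  [/\ 0 <= v, v = 0 \/ P v & forall y, P y -> y <= v].

Lemma sspec_uniq P v w : sspec P v -> sspec P w -> v = w.
Proof.
move=> [v0 vP vm] [w0 wP wm]; apply/eqP; rewrite eq_le; apply/andP; split.
  by case: vP => [->|/wm].
by case: wP => [->|/vm].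
Qed.

Lemma sspec_ext P Q v : (forall y, P y = Q y) -> sspec P v -> sspec Q v.
Proof.
move=> e [h1 h2 h3]; split => //; first by case: h2 => [->|h]; [left|right; rewrite -e].
by move=> y; rewrite -e; apply: h3.
Qed.

Lemma slope_spec (R : realType) (T : seq rat) (f : rat -> Cplx R) :
  sspec (fun y => (y \in T) && (f y != 0)) (slope_in T f).
Proof.
rewrite /slope_in /sspec; elim: T => [|a T [IH0 IH1 IH2]].
  by rewrite big_nil; split => //; left.
rewrite big_cons; set B := \big[_/_]_(_ <- _ | _) _ in IH0 IH1 IH2 *.
case: ifP => fa.
  rewrite /Order.max; case: ifP => h.
    split => //.
      by case: IH1 => [->|/andP[i1 i2]]; [left|right; rewrite inE i1 i2 orbT].
    move=> y /andP[]; rewrite inE => /orP[/eqP->|yT fy]; first by move=> _; apply: ltW.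
    by apply: IH2; rewrite yT fy.
  move/negbT: h; rewrite -leNgt => h.
  split; first by apply: le_trans IH0 h.
    by right; rewrite inE eqxx fa.
  move=> y /andP[]; rewrite inE => /orP[/eqP->//|yT fy].
  by apply: le_trans h; apply: IH2; rewrite yT fy.
split => //.
  by case: IH1 => [->|/andP[i1 i2]]; [left|right; rewrite inE i1 i2 orbT].
move=> y /andP[]; rewrite inE => /orP[/eqP->|yT fy]; first by rewrite fa.
by apply: IH2; rewrite yT fy.
Qed.

Definition patt (f : rat -> bool) (d : int) (y : rat) : bool :=
  f y && ~~ (d%:~R * y \is a Num.int).

Lemma fdiff_sigma_neq0 (R : realType) (f : rat -> Cplx R) (k l : int) y :
  (fdiff (sigma_pow k f) (sigma_pow l f) y != 0) =
  patt (fun y => f y != 0) (k - l) y.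
Proof.
rewrite /fdiff /sigma_pow /patt -mulrBl mulf_eq0 negb_or subr_eq0 gal_eq andbC.
by [].
Qed.

Lemma slope_patt (R : realType) (T : seq rat) (f : rat -> Cplx R) (k l : int) :
  (forall y, f y != 0 -> y \in T) ->
  sspec (patt (fun y => f y != 0) (k - l))
        (slope_in T (fdiff (sigma_pow k f) (sigma_pow l f))).
Proof.
move=> hT; apply: sspec_ext (slope_spec T _) => y.
rewrite fdiff_sigma_neq0; apply/andP/idP => [[]//|h]; split => //.
by apply: hT; case/andP: h.
Qed.

Lemma den_dvd (d : int) (k : rat) :
  (d%:~R * k \is a Num.int) = (`|denq k| %| `|d|)%N.
Proof.
have e0 := denq_neq0 k.
apply/idP/idP.
  move=> /intrP[z hz].
  have h : d * numq k = z * denq k.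
    apply/eqP; by rewrite -(eqr_int rat) !intrM numqE mulrA hz.
  have : (denq k %| d * numq k)%Z by rewrite h dvdz_mull ?dvdzz.
  rewrite Gauss_dvdzl //.
  by rewrite coprimezE coprime_sym coprime_num_den.
move=> hd; have /dvdzP[q ->] : (denq k %| d)%Z by [].
by rewrite intrM -mulrA [_ * k]mulrC -numqE -intrM rpred_int.
Qed.

Lemma int_dvd (c : nat) (d : int) (y : rat) :
  (c%:R * y \is a Num.int) -> (c %| `|d|)%N -> d%:~R * y \is a Num.int.
Proof.
move=> hc hd; have /dvdzP[q ->] : (c%:Z %| d)%Z by [].
by rewrite intrM -mulrA rpredM ?rpred_int.
Qed.

Lemma rden_dvd ks i n :
  (rden ks i %| n)%N = all (fun k => `|denq k| %| n)%N (take i ks).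
Proof.
rewrite /rden; elim: (take i ks) => [|k s IH] /=; first by rewrite dvd1n.
by rewrite dvdn_lcm IH.
Qed.

Lemma rden_gt0 ks i : (0 < rden ks i)%N.
Proof.
rewrite /rden; elim: (take i ks) => [|k s IH] //=.
by rewrite lcmn_gt0 IH andbT absz_gt0 denq_neq0.
Qed.

Lemma rden0 ks : rden ks 0 = 1%N.
Proof. by rewrite /rden take0. Qed.

Lemma rden_int ks i t : (t < i)%N -> (t < size ks)%N ->
  (rden ks i)%:R * nth 0 ks t \is a Num.int.
Proof.
move=> ti ts.
have : all (fun k => `|denq k| %| rden ks i)%N (take i ks) by rewrite -rden_dvd.
move=> /all_nthP => /(_ 0 t); rewrite size_take_min nth_take //.
have -> : (t < minn i (size ks))%N by rewrite leq_min ti ts.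
move=> /(_ isT) h.
have -> : (rden ks i)%:R = (Posz (rden ks i))%:~R :> rat by [].
by rewrite den_dvd.
Qed.

Lemma rden_div ks i (d : int) : (i <= size ks)%N ->
  (forall t, (t < i)%N -> d%:~R * nth 0 ks t \is a Num.int) ->
  (rden ks i %| `|d|)%N.
Proof.
move=> hi h; rewrite rden_dvd; apply/(all_nthP 0) => t.
rewrite size_take_min => ht.
have ti : (t < i)%N by move: ht; rewrite leq_min => /andP[].
by rewrite nth_take // -den_dvd h.
Qed.

Lemma all_take_ (T : Type) (p : pred T) n s : all p s -> all p (take n s).
Proof. by rewrite -{1}(cat_take_drop n s) all_cat => /andP[]. Qed.

Lemma rden_mono ks i j : (i <= j)%N -> (rden ks i %| rden ks j)%N.
Proof.
move=> ij; rewrite rden_dvd -(take_takel _ ij) ; apply: all_take_.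
by rewrite -rden_dvd.
Qed.

Lemma sorted_ge (ks : seq rat) : sorted (fun x y => y < x) ks ->
  forall t u, (t <= u)%N -> (u < size ks)%N -> nth 0 ks u <= nth 0 ks t.
Proof.
move=> hs t u; rewrite leq_eqVlt => /orP[/eqP->//|tu] us.
have tr : transitive (fun x y : rat => y < x).
  by move=> y x z h1 h2; exact: lt_trans h2 h1.
apply: ltW; apply: (sorted_ltn_nth tr 0 hs) => //; rewrite inE //.
exact: ltn_trans tu us.
Qed.

Section CharB.
Variables (ks : seq rat) (r : nat) (fq fa : rat -> bool) (Lq La : int -> rat).
Hypothesis hs : sorted (fun x y => y < x) ks.
Hypothesis hLq : forall d, sspec (patt fq d) (Lq d).
Hypothesis hLa : forall d, sspec (patt fa d) (La d).
Hypothesis hks : forall x, x \in ks <-> (x != 0 /\ exists d, x = Lq d).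
Hypothesis hr : (0 < r)%N.
Hypothesis hq : forall y, fq y -> r%:R * y \is a Num.int.
Hypothesis ha : forall y, fa y -> 0 < y.

Lemma ks_patt x : x \in ks -> exists d, x = Lq d /\ patt fq d x.
Proof.
move=> /hks [x0 [d xd]]; exists d; split => //.
have [_ [h|h] _] := hLq d; last by rewrite xd.
by move: x0; rewrite xd h eqxx.
Qed.

Lemma ks_fq x : x \in ks -> fq x.
Proof. by move=> /ks_patt [d [_ /andP[]]]. Qed.

Lemma ks_pos x : x \in ks -> 0 < x.
Proof.
move=> /hks [x0 [d xd]]; have [h _ _] := hLq d.
by rewrite lt_def x0 xd h.
Qed.

Lemma Lq_ks d : Lq d != 0 -> Lq d \in ks.
Proof. by move=> h; apply/hks; split => //; exists d. Qed.

Lemma K1 d y : inA ks y -> ~~ (d%:~R * y \is a Num.int) -> y <= Lq d.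
Proof.
move=> /andP[y0 /orP[yn|/existsP[i /andP[yi hi]]]] hd.
  by rewrite rpredM ?rpred_int ?(intr_nat yn) in hd.
have [t ti ht] : exists2 t, (t < i.+1)%N & ~~ (d%:~R * nth 0 ks t \is a Num.int).
  case: (boolP [exists t : 'I_i.+1, ~~ (d%:~R * nth 0 ks t \is a Num.int)]).
    by move=> /existsP[t ht]; exists t.
  rewrite negb_exists => /forallP hn; exfalso.
  have hdiv : (rden ks i.+1 %| `|d|)%N.
    apply: rden_div => [|t ti]; first exact: ltn_ord i.
    by have := hn (Ordinal ti); rewrite negbK.
  have := int_dvd (intr_nat hi) hdiv.
  by rewrite (negbTE hd).
have ts : (t < size ks)%N := leq_ltn_trans (ti : (t <= i)%N) (ltn_ord i).
have [_ _ hm] := hLq d.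
apply: le_trans yi _; apply: le_trans (sorted_ge hs (ti : (t <= i)%N) (ltn_ord i)) _.
by apply: hm; rewrite /patt ks_fq ?mem_nth // ht.
Qed.

Lemma charB :
  (forall k l : nat, (k <= r)%N -> (l <= r)%N ->
      La (k%:Z - l%:Z) = Lq (k%:Z - l%:Z)) <->
  ((forall y, y \in ks -> fa y) /\ (forall y, fa y -> inA ks y)).
Proof.
split.
- move=> H; split.
  + move=> y yk; have [d [yd _]] := ks_patt yk.
    have y0 : y != 0 by rewrite gt_eqF // ks_pos.
    set k := `|(d %% r%:Z)%Z|%N.
    have r0 : (r%:Z != 0) by rewrite eqz_nat -lt0n.
    have e : k%:Z = (d %% r%:Z)%Z by rewrite /k gez0_abs // modz_ge0.
    have hk : (k < r)%N.
      have r0' : (0 < r%:Z) by rewrite ltz_nat.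
      by have := ltz_pmod d r0'; rewrite -e ltz_nat.
    have eL : Lq k = Lq d.
      apply: (@sspec_uniq (patt fq d)); last exact: hLq.
      apply: sspec_ext (hLq k) => y'; rewrite /patt; case fy: (fq y') => //=.
      have -> : (k%:Z)%:~R = ((d %% r%:Z)%Z)%:~R :> rat by rewrite e.
      rewrite intrD intrN mulrDl mulNr intrM -mulrA rpredBr //.
      by apply: rpredM; [exact: rpred_int | exact: hq].
    have := H k 0%N (ltnW hk) (leq0n r); rewrite subr0 eL -yd => hLk.
    have [_ [h|h] _] := hLa k; first by move: y0; rewrite -hLk h eqxx.
    by move: h; rewrite hLk /patt => /andP[].
  + move=> y fy; have y0 := ha fy; rewrite /inA y0 /=.
    case yn: (y \is a Num.nat) => //=.
    have iks : (find (fun k : rat => (k < y)%R) ks <= size ks)%N := find_size _ _.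
    have Dr : (rden ks (find (fun k : rat => (k < y)%R) ks) <= r)%N.
      apply: dvdn_leq hr _; have := rden_div (d := r%:Z) iks; apply => t ti.
      by apply: hq; apply: ks_fq; apply: mem_nth; exact: leq_trans ti iks.
    have key : forall t, (t < size ks)%N ->
        (y <= nth 0 ks t) = (t < find (fun k : rat => (k < y)%R) ks)%N.
      move=> t ts; apply/idP/idP.
        move=> h; rewrite ltnNge; apply/negP => it.
        have iS : (find (fun k : rat => (k < y)%R) ks < size ks)%N := leq_ltn_trans it ts.
        have := nth_find 0 (a := fun k => k < y) (s := ks).
        rewrite has_find => /(_ iS) /= hi.
        have := le_lt_trans (le_trans h (sorted_ge hs it ts)) hi.
        by rewrite ltxx.
      by move=> ti; have := before_find 0 ti => /negbT; rewrite -leNgt.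
    move: key Dr; set i := find _ ks => key Dr.
    case hD: ((rden ks i)%:R * y \is a Num.int).
      case: (posnP i) => [i0|ipos].
        move: hD; rewrite i0 rden0 mul1r => hD.
        by move: yn; rewrite natrEint hD (ltW y0).
      have jS : (i.-1 < size ks)%N by rewrite prednK.
      apply/existsP; exists (Ordinal jS) => /=.
      rewrite key // prednK // leqnn /= natrEint hD mulr_ge0 ?ler0n ?(ltW y0) //.
    exfalso.
    have hp : patt fa (rden ks i) y by rewrite /patt fy /=; exact: negbT hD.
    have [_ _ hm] := hLa (rden ks i).
    have yle := hm y hp.
    have := H (rden ks i) 0%N Dr (leq0n _); rewrite subr0 => eD.
    rewrite eD in yle.
    have L0 : Lq (rden ks i) != 0 by rewrite gt_eqF // (lt_le_trans y0 yle).
    have Lk := Lq_ks L0.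
    have [_ [h|h] _] := hLq (rden ks i); first by rewrite h eqxx in L0.
    have ts : (index (Lq (rden ks i)) ks < size ks)%N by rewrite index_mem.
    have nt := nth_index 0 Lk.
    have ti : (index (Lq (rden ks i)) ks < i)%N by rewrite -key // nt.
    have := rden_int ti ts; rewrite nt.
    by move: h; rewrite /patt => /andP[_ /negP].
- move=> [C1 C2] k l _ _.
  apply: (sspec_uniq (hLa _)).
  have [L0 LP Lm] := hLq (k%:Z - l%:Z); split => //.
    case: (eqVneq (Lq (k%:Z - l%:Z)) 0) => [->|Lne]; first by left.
    right; case: LP => [h|h]; first by rewrite h eqxx in Lne.
    move: h => /andP[_ h2]; rewrite /patt h2 andbT; apply: C1; exact: Lq_ks.
  by move=> y /andP[fy hy]; apply: K1 (C2 y fy) hy.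
Qed.
End CharB.

Lemma size_eqmem (T : eqType) (s1 s2 : seq T) :
  uniq s1 -> uniq s2 -> s1 =i s2 -> size s1 = size s2.
Proof. by move=> u1 u2 e; apply: perm_size; apply: uniq_perm. Qed.

Lemma is_card_uniq P a b : is_card P a -> is_card P b -> a = b.
Proof.
move=> [s1 [u1 m1 <-]] [s2 [u2 m2 <-]]; apply: size_eqmem => // x.
by rewrite m1 m2.
Qed.

Lemma is_card_addks (ks : seq rat) (Q P : rat -> bool) n :
  uniq ks -> (forall k, k \in ks -> Q k) ->
  (forall x, P x = Q x && (x \notin ks)) -> is_card P n ->
  is_card Q (size ks + n).
Proof.
move=> uk hQ hP [s [us ms <-]]; exists (ks ++ s); split.
- rewrite cat_uniq uk us andbT /=; apply/hasPn => x; rewrite ms hP.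
  by case/andP.
- move=> x; rewrite mem_cat ms hP; case xk: (x \in ks) => /=.
    by rewrite hQ.
  by rewrite andbT.
- by rewrite size_cat.
Qed.

Lemma nat_dvd (c c' : nat) (x : rat) : (c %| c')%N ->
  c%:R * x \is a Num.nat -> c'%:R * x \is a Num.nat.
Proof.
move=> /dvdnP[e ->] h; rewrite natrM -mulrA rpredM //; exact: natr_nat.
Qed.

Definition W (c : nat) (k : rat) : seq rat :=
  [seq (n.+1)%:R / c%:R | n <- iota 0 (Num.truncn (c%:R * k))].

Lemma W_uniq c k : (0 < c)%N -> uniq (W c k).
Proof.
move=> c0; rewrite map_inj_uniq ?iota_uniq // => n m.
have ci : (c%:R : rat)^-1 != 0 by rewrite invr_eq0 pnatr_eq0 -lt0n.
by move=> /(mulIf ci) /eqP; rewrite eqr_nat => /eqP [].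
Qed.

Lemma W_size c k : size (W c k) = Num.truncn (c%:R * k).
Proof. by rewrite size_map size_iota. Qed.

Lemma W_mem c k x : (0 < c)%N -> 0 <= k ->
  (x \in W c k) = [&& 0 < x, x <= k & c%:R * x \is a Num.nat].
Proof.
move=> c0 k0; have cr : (0 < c%:R :> rat) by rewrite ltr0n.
have cne : (c%:R : rat) != 0 by rewrite gt_eqF.
apply/mapP/idP.
  move=> [n]; rewrite mem_iota add0n /= => hn ->.
  have e : c%:R * (n.+1%:R / c%:R) = n.+1%:R :> rat by rewrite mulrC divfK.
  rewrite divr_gt0 ?ltr0n // e natr_nat andbT.
  rewrite -(ler_pM2l cr) e; move: hn; rewrite truncn_gt_nat //.
move=> /and3P[x0 xk /natrP[m hm]].
have m0 : (0 < m)%N.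
  by rewrite lt0n -(pnatr_eq0 rat) -hm mulf_neq0 // gt_eqF.
exists m.-1; last by rewrite prednK // -hm mulrAC divff // mul1r.
rewrite mem_iota add0n /= truncn_gt_nat prednK // -hm ler_pM2l //.
Qed.

Section Count.
Variable ks : seq rat.
Hypothesis hs : sorted (fun x y => y < x) ks.
Hypothesis hpos : forall k, k \in ks -> 0 < k.

Lemma nth_ge0 i : 0 <= nth 0 ks i.
Proof.
case: (ltnP i (size ks)) => hi; first by apply: ltW; apply: hpos; exact: mem_nth.
by rewrite nth_default.
Qed.

Definition D (i : nat) : seq rat :=
  [seq x <- W (rden ks i.+1) (nth 0 ks i) | ~~ ((rden ks i)%:R * x \is a Num.nat)].

Lemma D_mem i x : (x \in D i) = ~~ ((rden ks i)%:R * x \is a Num.nat) &&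
   [&& 0 < x, x <= nth 0 ks i & (rden ks i.+1)%:R * x \is a Num.nat].
Proof. by rewrite mem_filter W_mem ?rden_gt0 ?nth_ge0. Qed.

Lemma D_uniq i : uniq (D i).
Proof. by rewrite filter_uniq // W_uniq ?rden_gt0. Qed.

Lemma D_size i : size (D i) =
  (Num.truncn (((rden ks i.+1)%:R * nth 0 ks i)%R) -
   Num.truncn (((rden ks i)%:R * nth 0 ks i)%R))%N.
Proof.
set p := (fun x : rat => (rden ks i)%:R * x \is a Num.nat).
have e : count p (W (rden ks i.+1) (nth 0 ks i)) =
         Num.truncn ((rden ks i)%:R * nth 0 ks i).
  rewrite -size_filter -W_size; apply: size_eqmem.
  - by rewrite filter_uniq // W_uniq ?rden_gt0.
  - by rewrite W_uniq ?rden_gt0.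
  move=> x; rewrite mem_filter !W_mem ?rden_gt0 ?nth_ge0 //.
  rewrite /p; case h: ((rden ks i)%:R * x \is a Num.nat) => /=; last by rewrite !andbF.
  by rewrite (nat_dvd ((@rden_mono ks _ _ ) (leqnSn i)) h) !andbT.
rewrite size_filter -W_size -(count_predC p) e addKn.
by apply: eq_count.
Qed.

Lemma iotaS0 j : iota 0 j.+1 = iota 0 j ++ [:: j].
Proof. by rewrite -addn1 iotaD. Qed.

Definition U (j : nat) : seq rat := flatten [seq D i | i <- iota 0 j].

Definition Hj (j : nat) (x : rat) :=
  has (fun i => (x <= nth 0 ks i) && ((rden ks i.+1)%:R * x \is a Num.nat)) (iota 0 j).

Lemma U_rec j : U j.+1 = U j ++ D j.
Proof. by rewrite /U -addn1 iotaD map_cat flatten_cat /= cats0. Qed.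

Lemma U_mem j x : (j <= size ks)%N ->
  (x \in U j) = [&& 0 < x, ~~ (x \is a Num.nat) & Hj j x].
Proof.
elim: j => [|j IH] hj; first by rewrite /U /Hj /= !andbF.
rewrite U_rec mem_cat IH ?(ltnW hj) // D_mem.
rewrite /Hj iotaS0 has_cat /= orbF.
apply/idP/idP.
  case/orP => [/and3P[-> -> ->]//|/andP[hn /and3P[x0 xk hx]]].
  rewrite x0 xk hx /= orbT andbT; apply/negP => xn.
  by move: hn; rewrite rpredM ?natr_nat.
move=> /and3P[x0 xn /orP[h|/andP[xk hx]]]; first by rewrite x0 xn h.
case hr: ((rden ks j)%:R * x \is a Num.nat); last by rewrite /= x0 xk hx orbT.
case: j IH hj xk hx hr => [|j] IH hj xk hx hr.
  by move: hr; rewrite rden0 mul1r => hr; rewrite hr in xn.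
apply/orP; left; rewrite x0 xn !andTb; apply/hasP; exists j.
  by rewrite mem_iota add0n ltnSn.
rewrite hr andbT; apply: le_trans xk _.
by apply: sorted_ge => //.
Qed.

Lemma U_uniq j : (j <= size ks)%N -> uniq (U j).
Proof.
elim: j => [|j IH] hj; first by [].
rewrite U_rec cat_uniq IH ?(ltnW hj) // D_uniq andbT /=.
apply/hasPn => x; rewrite D_mem U_mem ?(ltnW hj) // => /andP[hn _].
apply/negP => /and3P[_ _]; rewrite /Hj => /hasP[i0]; rewrite mem_iota add0n /= => ij.
move=> /andP[_ hi]; move: hn; rewrite (nat_dvd ((@rden_mono ks _ _ ) ij) hi).
by [].
Qed.

Lemma U_size j : size (U j) = (\sum_(i < j) size (D i))%N.
Proof.
elim: j => [|j IH]; first by rewrite big_ord0.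
by rewrite U_rec size_cat IH big_ord_recr.
Qed.

Lemma has_iota_exists n (P : nat -> bool) :
  has P (iota 0 n) = [exists i : 'I_n, P i].
Proof.
apply/hasP/existsP => [[i0]|[i0 hi]].
  by rewrite mem_iota add0n /= => hi h; exists (Ordinal hi).
by exists (nat_of_ord i0) => //; rewrite mem_iota add0n ltn_ord.
Qed.

Lemma card_AnN :
  is_card (fun x => inA ks x && ~~ (x \is a Num.nat)) (size (U (size ks))).
Proof.
exists (U (size ks)); split => //; first exact: U_uniq.
move=> x; rewrite U_mem // /inA /Hj has_iota_exists.
by case: (x \is a Num.nat); rewrite ?andbF ?andbT.
Qed.

Lemma sum_formula :
  ((size (U (size ks)))%:R : rat) =
  \sum_(i < size ks) ((rden ks i.+1)%:R * nth 0 ks i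
                    - (Num.floor ((rden ks i)%:R * nth 0 ks i))%:~R).
Proof.
rewrite U_size natr_sum; apply: eq_bigr => i _; rewrite D_size.
have k0 := nth_ge0 i.
have h1 : (rden ks i)%:R * nth 0 ks i <= (rden ks i.+1)%:R * nth 0 ks i.
  apply: ler_wpM2r => //; rewrite ler_nat; apply: dvdn_leq; first exact: rden_gt0.
  exact: rden_mono.
rewrite natrB ?le_truncn //.
have hn : (rden ks i.+1)%:R * nth 0 ks i \is a Num.nat.
  rewrite natrEint rden_int ?mulr_ge0 ?ler0n //; exact: ltn_ord.
move: hn; rewrite natrEtruncn => /eqP ->; congr (_ - _).
have hz : 0 <= Num.floor ((rden ks i)%:R * nth 0 ks i).
  by rewrite floor_ge0 mulr_ge0 ?ler0n.
by rewrite truncn_floor mulr_ge0 ?ler0n // -[in RHS](gez0_abs hz).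
Qed.
End Count.

Section Homeo.
Variable R : realType.
Local Notation C := (Cplx R).

Definition sel (s t : nat) (psi : 'I_t -> option 'I_s) (v : 'rV[C]_s) : 'rV[C]_t :=
  \row_i (if psi i is Some k then v 0 k else 0).

Lemma sel_cont s t (psi : 'I_t -> option 'I_s) : continuous (sel psi).
Proof.
move=> u A /(@nbhs_ballP C ('rV[C]_t)) [e /= e0 eA].
apply/(@nbhs_ballP C ('rV[C]_s)); exists e => //= v [_ uv]; apply: eA; split => // i j.
rewrite !mxE; case: (psi j) => [k|]; first exact: uv.
exact: ballxx.
Qed.

Variables (s : nat) (Pn Pz : pred 'I_s).
Hypothesis hdis : forall j, Pn j -> ~~ Pz j.

Definition Fr := [pred j | ~~ Pn j && ~~ Pz j].

Definition phi (i : 'I_(#|Pn| + #|Fr|)) : 'I_s :=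
  match fintype.split i with inl i1 => enum_val i1 | inr i2 => enum_val i2 end.

Lemma evPn (i1 : 'I_#|Pn|) : Pn (enum_val i1).
Proof. exact: enum_valP i1. Qed.
Lemma evFr (i2 : 'I_#|Fr|) : ~~ Pn (enum_val i2) && ~~ Pz (enum_val i2).
Proof. exact: enum_valP i2. Qed.

Definition psi (j : 'I_s) : option 'I_(#|Pn| + #|Fr|) := [pick i | phi i == j].

Lemma phi_lo (i : 'I_(#|Pn| + #|Fr|)) : Pn (phi i) = (i < #|Pn|)%N.
Proof.
rewrite /phi; case: splitP => [i1 _|i2 _].
  exact: evPn.
by have /andP[/negbTE] := evFr i2.
Qed.

Lemma phi_nz (i : 'I_(#|Pn| + #|Fr|)) : ~~ Pz (phi i).
Proof.
case h: (Pn (phi i)); first exact: hdis.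
rewrite /phi in h *; case: splitP h => [i1 _|i2 _] h.
  by rewrite evPn in h.
by have /andP[] := evFr i2.
Qed.

Lemma phi_inj : injective phi.
Proof.
move=> i j; rewrite /phi -{2}(splitK i) -{2}(splitK j).
case: (fintype.split i) => [i1|i2]; case: (fintype.split j) => [j1|j2] e.
- by rewrite (enum_val_inj e).
- by move: (evPn i1) (evFr j2); rewrite e => ->.
- by move: (evFr i2) (evPn j1); rewrite e => /andP[/negbTE ->].
- by rewrite (enum_val_inj e).
Qed.

Lemma phi_surj j : ~~ Pz j -> exists i, phi i = j.
Proof.
move=> hz; case hn: (Pn j).
  have hj : j \in Pn by [].
  exists (lshift #|Fr| (enum_rank_in hj j)).
  by rewrite /phi (unsplitK (inl _)) enum_rankK_in.
have hj : j \in Fr by rewrite inE hn hz.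
exists (rshift #|Pn| (enum_rank_in hj j)).
by rewrite /phi (unsplitK (inr _)) enum_rankK_in.
Qed.

Lemma psi_phi i : psi (phi i) = Some i.
Proof.
rewrite /psi; case: pickP => [k /eqP/phi_inj -> //|h].
by have := h i; rewrite eqxx.
Qed.

Definition Aset : set 'rV[C]_s :=
  [set a | (forall j, Pn j -> a 0 j != 0) /\ (forall j, Pz j -> a 0 j = 0)].

Lemma homeo_gen : homeomorphic Aset (CstarC R #|Pn| #|Fr|).
Proof.
exists (sel (fun i => Some (phi i))), (sel psi); split.
- move=> a [ha _] i hi; rewrite mxE; apply: ha; by rewrite phi_lo.
- move=> v hv; split => j hj; rewrite mxE /psi; case: pickP => [i /eqP ei|h].
  + by apply: hv; rewrite -phi_lo ei.
  + have [i ei] := phi_surj (hdis hj).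
    by have := h i; rewrite ei eqxx.
  + by move: (phi_nz i); rewrite ei hj.
  + by [].
- move=> a [_ ha]; apply/rowP => j; rewrite !mxE /psi.
  case: pickP => [i /eqP ei|h]; first by rewrite mxE ei.
  case hz: (Pz j); first by rewrite ha.
  have [i ei] := phi_surj (negbT hz).
  by have := h i; rewrite ei eqxx.
- move=> v hv; apply/rowP => i; rewrite !mxE psi_phi //.
- by split; apply: continuous_subspaceT; apply: sel_cont.
Qed.
End Homeo.

Lemma in_ramP T (R : realType) (f : rat -> Cplx R) r : in_ram T f r ->
  (0 < r)%N /\ forall k, k \in T -> f k != 0 -> r%:R * k \is a Num.nat.
Proof.
move=> /andP[r0 /allP h]; split => // k kT fk.
by have := h k kT; rewrite fk.
Qed.

Lemma ram_ok T (R : realType) (f : rat -> Cplx R) :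
  (forall k, k \in T -> 0 < k) -> in_ram T f (ram T f).
Proof.
move=> hT; rewrite /ram; case: pselect => [h|h].
  by case: (ex_minnP h).
exfalso; apply: h; exists (\prod_(k <- T) `|denq k|)%N.
rewrite /in_ram prodn_gt0 /=; last by move=> i; rewrite absz_gt0 denq_neq0.
apply/allP => k kT; apply/implyP => _.
rewrite natrEint mulr_ge0 ?ler0n ?ltW ?hT // andbT.
have -> : (\prod_(k <- T) `|denq k|)%N%:R = (Posz (\prod_(k <- T) `|denq k|)%N)%:~R :> rat by [].
by rewrite den_dvd (big_rem k kT) /= dvdn_mulr.
Qed.

Lemma slope_ext T (R : realType) (f g : rat -> Cplx R) :
  f =1 g -> slope_in T f = slope_in T g.
Proof. by move=> e; rewrite /slope_in; apply: eq_bigl => k; rewrite e. Qed.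

Lemma sigma0 (R : realType) (f : rat -> Cplx R) : sigma_pow 0 f =1 f.
Proof. by move=> y; rewrite /sigma_pow expr0z mul1r. Qed.

Lemma slope_shift T (R : realType) (f : rat -> Cplx R) (k l : int) :
  (forall y, f y != 0 -> y \in T) ->
  slope_in T (fdiff (sigma_pow k f) (sigma_pow l f)) =
  slope_in T (fdiff (sigma_pow (k - l) f) (sigma_pow 0 f)).
Proof.
move=> hT; apply: sspec_uniq (slope_patt k l hT) _.
by apply: sspec_ext (slope_patt (k - l) 0 hT) => y; rewrite subr0.
Qed.

Section Glue.
Variables (R : realType) (S : seq rat) (q : rat -> Cplx R).
Hypothesis hq : expfactor_on S q.
Variable ks : seq rat.
Hypothesis hks_sorted : sorted (fun x y => y < x) ks.
Hypothesis hks_levels : forall x, x \in ks <-> is_Level S q x.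

Local Notation r := (ram S q).
Local Notation s := (cs S q).
Local Notation K := (cK S q).

Lemma hqS y : q y != 0 -> y \in S.
Proof. by case: hq => h _; apply: h. Qed.

Lemma hqpos y : q y != 0 -> 0 < y.
Proof. by case: hq => h1 h2 hy; apply: h2; apply: h1. Qed.

Lemma r_ok : (0 < r)%N /\ forall y, q y != 0 -> r%:R * y \is a Num.nat.
Proof.
have [h1 h2] := in_ramP (ram_ok q (proj2 hq)); split => // y hy.
by apply: h2 => //; apply: hqS.
Qed.

Lemma r_gt0 : (0 < r)%N. Proof. by case: r_ok. Qed.

Lemma K_spec : sspec (fun y => (y \in S) && (q y != 0)) K.
Proof. exact: slope_spec. Qed.

Lemma K_ge y : q y != 0 -> y <= K.
Proof. by move=> hy; case: K_spec => _ _ h; apply: h; rewrite hqS. Qed.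

Lemma rK_nat : r%:R * K \is a Num.nat.
Proof.
case: K_spec => _ [->|/andP[_ hK]] _; first by rewrite mulr0 rpred0.
by case: r_ok => _ h; apply: h.
Qed.

Lemma s_eq : (s%:R : rat) = r%:R * K.
Proof. by have := rK_nat; rewrite natrEtruncn => /eqP. Qed.

Definition gpt (j : 'I_s) : rat := (j.+1)%:R / r%:R.

Lemma gpt_inj : injective gpt.
Proof.
move=> i j; rewrite /gpt.
have ci : (r%:R : rat)^-1 != 0 by rewrite invr_eq0 pnatr_eq0 -lt0n r_gt0.
by move=> /(mulIf ci) /eqP; rewrite eqr_nat => /eqP [] /val_inj.
Qed.

Lemma gpt_pos j : 0 < gpt j.
Proof. by rewrite divr_gt0 ?ltr0n ?r_gt0. Qed.

Lemma gpt_r j : r%:R * gpt j = (j.+1)%:R.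
Proof. by rewrite /gpt mulrC divfK // pnatr_eq0 -lt0n r_gt0. Qed.

Lemma gpt_le j : gpt j <= K.
Proof.
have r0 : (0 < r%:R :> rat) by rewrite ltr0n r_gt0.
by rewrite -(ler_pM2l r0) gpt_r -s_eq ler_nat ltn_ord.
Qed.

Lemma on_grid x : 0 < x -> x <= K -> r%:R * x \is a Num.nat ->
  exists j : 'I_s, x = gpt j.
Proof.
move=> x0 xK /natrP[m hm].
have r0 : (0 < r%:R :> rat) by rewrite ltr0n r_gt0.
have m0 : (0 < m)%N by rewrite -(ltr0n rat) -hm mulr_gt0.
have ms : (m.-1 < s)%N.
  by rewrite prednK // -(ler_nat rat) s_eq -hm ler_pM2l.
exists (Ordinal ms); rewrite /gpt /= prednK // -hm mulrAC divff ?mul1r //.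
by rewrite gt_eqF.
Qed.

Lemma grid_mem x : (x \in grid r s) = [exists j : 'I_s, x == gpt j].
Proof.
apply/mapP/existsP => [[n]|[j /eqP ->]].
  rewrite mem_iota add0n /= => hn ->; by exists (Ordinal hn).
by exists (nat_of_ord j) => //; rewrite mem_iota add0n ltn_ord.
Qed.

Section QA.
Variable a : 'rV[Cplx R]_s.

Lemma qa_val j : qa r a (gpt j) = a 0 j.
Proof.
rewrite /qa (bigD1 j) //= -/(gpt j) eqxx big1 ?addr0 // => i ij.
by case: eqP => // /gpt_inj e; rewrite e eqxx in ij.
Qed.

Lemma qa_supp y : qa r a y != 0 -> exists j : 'I_s, y = gpt j.
Proof.
move=> h; suff /existsP[j /eqP ->] : [exists j : 'I_s, y == gpt j] by exists j.
apply: contraNT h; rewrite negb_exists => /forallP hn.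
rewrite /qa big1 // => i _; have := hn i; rewrite -/(gpt i).
by case: eqP.
Qed.

Lemma qa_grid y : qa r a y != 0 -> y \in grid r s.
Proof.
by move=> /qa_supp[j ->]; rewrite grid_mem; apply/existsP; exists j.
Qed.

Lemma qa_pos y : qa r a y != 0 -> 0 < y.
Proof. by move=> /qa_supp[j ->]; exact: gpt_pos. Qed.
End QA.

Definition Lq (d : int) := slope_in S (fdiff (sigma_pow d q) (sigma_pow 0 q)).

Lemma hLq d : sspec (patt (fun y => q y != 0) d) (Lq d).
Proof. by apply: sspec_ext (slope_patt d 0 hqS) => y; rewrite subr0. Qed.

Lemma LvE i : slope_in S (fdiff q (sigma_pow i q)) = Lq (- i).
Proof.
have -> : slope_in S (fdiff q (sigma_pow i q)) =
          slope_in S (fdiff (sigma_pow 0 q) (sigma_pow i q)).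
  by apply: slope_ext => y; rewrite /fdiff sigma0.
apply: sspec_uniq (slope_patt 0 i hqS) _.
by apply: sspec_ext (hLq (- i)) => y; rewrite sub0r.
Qed.

Lemma hks' x : x \in ks <-> (x != 0 /\ exists d, x = Lq d).
Proof.
split.
  move=> /hks_levels [x0 [i xi]]; split => //; exists (- i); by rewrite xi LvE.
move=> [x0 [d xd]]; apply/hks_levels; split => //; exists (- d).
by rewrite xd LvE opprK.
Qed.

Definition La (a : 'rV[Cplx R]_s) (d : int) :=
  slope_in (grid r s) (fdiff (sigma_pow d (qa r a)) (sigma_pow 0 (qa r a))).

Lemma hLa a d : sspec (patt (fun y => qa r a y != 0) d) (La a d).
Proof. by apply: sspec_ext (slope_patt d 0 (@qa_grid a)) => y; rewrite subr0. Qed.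

Lemma hqint y : q y != 0 -> r%:R * y \is a Num.int.
Proof. by move=> hy; apply: intr_nat; case: r_ok => _ h; apply: h. Qed.

Lemma equivE a : equiv_q S q a <->
  (forall k l : nat, (k <= r)%N -> (l <= r)%N ->
     La a (k%:Z - l%:Z) = Lq (k%:Z - l%:Z)).
Proof.
rewrite /equiv_q /=; split => h k l hk hl; have := h k l hk hl.
  by rewrite (slope_shift _ _ hqS) (slope_shift _ _ (@qa_grid a)).
by rewrite (slope_shift _ _ hqS) (slope_shift _ _ (@qa_grid a)).
Qed.

Lemma charB_glue a : equiv_q S q a <->
  ((forall y, y \in ks -> qa r a y != 0) /\ (forall y, qa r a y != 0 -> inA ks y)).
Proof.
apply: (iff_trans (equivE a)).
exact: (charB hks_sorted hLq (hLa a) hks' r_gt0 hqint (@qa_pos a)).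
Qed.

Lemma grid_pos k : k \in grid r s -> 0 < k.
Proof. by rewrite grid_mem => /existsP[j /eqP ->]; exact: gpt_pos. Qed.

Lemma traceE (a : 'rV[Cplx R]_s) : @trace_zero R r s a <->
  (forall j : 'I_s, gpt j \is a Num.int -> a 0 j = 0).
Proof.
have [rho0 hrho] := in_ramP (ram_ok (qa r a) grid_pos).
rewrite /trace_zero; split.
  move=> h j hj; have := h (gpt j); rewrite /sigma_pow.
  under eq_bigr => t _.
    have -> : galfactor R (gpt j) ^ (t : nat) = 1.
      apply/eqP; rewrite -(expr0z (galfactor R (gpt j))) gal_eq subr0.
      by rewrite rpredM ?rpred_int.
    rewrite mul1r qa_val.
  over.
  rewrite sumr_const card_ord => /eqP; rewrite mulrn_eq0 => /orP[|/eqP//].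
  by rewrite eqn0Ngt rho0.
move=> h y; rewrite /sigma_pow; case: (eqVneq (qa r a y) 0) => [->|hy].
  by rewrite big1 // => t _; rewrite mulr0.
rewrite -big_distrl /=; apply/eqP; rewrite mulf_eq0; apply/orP; left.
have [j yj] := qa_supp hy.
have hyn : ~~ (y \is a Num.int).
  apply/negP => yi; move: hy; rewrite yj qa_val h ?eqxx //; by rewrite -yj.
have hry : (ram (grid r s) (qa r a))%:R * y \is a Num.nat := hrho y (qa_grid hy) hy.
set g := galfactor R y.
have g1 : g ^+ (ram (grid r s) (qa r a)) = 1.
  apply/eqP; rewrite exprnP -(expr0z g) gal_eq subr0; exact: intr_nat.
have gn1 : g - 1 != 0.
  rewrite subr_eq0 -{1}(expr1z g) -(expr0z g) gal_eq subr0 mul1r //.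
have e := subrX1 g (ram (grid r s) (qa r a)).
move: e; rewrite g1 subrr => /esym /eqP; rewrite mulf_eq0 (negbTE gn1) /=.
move=> H; under eq_bigr => t _ do rewrite -exprnP.
exact: H.
Qed.

Lemma ks_props k : k \in ks ->
  [/\ q k != 0, 0 < k, k <= K, inA ks k & ~~ (k \is a Num.nat)].
Proof.
move=> kk; have [k0 [d kd]] := (hks' k).1 kk.
have [_ [h|h] _] := hLq d; first by move: k0; rewrite kd h eqxx.
rewrite -kd in h; case/andP: h => qk hd.
have kpos := hqpos qk.
have kn : ~~ (k \is a Num.nat).
  by apply/negP => /intr_nat kn; move: hd; rewrite rpredM ?rpred_int.
split => //; first exact: K_ge.
rewrite /inA kpos (negbTE kn) /=; apply/existsP.
have ts : (index k ks < size ks)%N by rewrite index_mem.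
exists (Ordinal ts); rewrite /= nth_index // lexx /=.
rewrite natrEint mulr_ge0 ?ler0n ?(ltW kpos) // andbT.
by have := rden_int (ltnSn (index k ks)) ts; rewrite nth_index.
Qed.

Lemma ks_uniq : uniq ks.
Proof.
apply: (sorted_uniq _ _ hks_sorted).
  by move=> y x z h1 h2; exact: lt_trans h2 h1.
by move=> x; rewrite /= ltxx.
Qed.

Lemma rden_r i : (i <= size ks)%N -> (rden ks i %| r)%N.
Proof.
move=> hi; apply: (rden_div (d := r%:Z) hi) => t ti.
have ts : (t < size ks)%N := leq_trans ti hi.
by have [qk _ _ _ _] := ks_props (mem_nth 0 ts); apply: hqint.
Qed.

Lemma inA_rnat x : inA ks x -> r%:R * x \is a Num.nat.
Proof.
move=> /andP[x0 /orP[xn|/existsP[i /andP[_ hi]]]].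
  by rewrite rpredM ?natr_nat.
exact: nat_dvd (rden_r (ltn_ord i)) hi.
Qed.

Lemma inA_pos x : inA ks x -> 0 < x.
Proof. by case/andP. Qed.

Lemma inA_le x : inA ks x -> ~~ (x \is a Num.nat) -> x <= K.
Proof.
move=> /andP[x0 /orP[xn|/existsP[i /andP[xi _]]]] hn; first by rewrite xn in hn.
apply: le_trans xi _.
by have [_ _ h _ _] := ks_props (mem_nth 0 (ltn_ord i)).
Qed.

Definition Pn : pred 'I_s := fun j => gpt j \in ks.
Definition PzB : pred 'I_s := fun j => ~~ inA ks (gpt j).
Definition PzS : pred 'I_s := fun j => ~~ inA ks (gpt j) || (gpt j \is a Num.int).

Lemma Bq_eq : Bq S q = Aset Pn PzB.
Proof.
apply/seteqP; split => a /=.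
  move=> /charB_glue [C1 C2]; split => j hj.
    by rewrite -qa_val; apply: C1.
  apply/eqP; apply: contraTT hj => hj; rewrite /PzB negbK.
  by apply: C2; rewrite qa_val.
move=> [A1 A2]; apply/charB_glue; split.
  move=> y yk; have [qy y0 yK yA _] := ks_props yk.
  have [j yj] := on_grid y0 yK (inA_rnat yA).
  by rewrite yj qa_val; apply: A1; rewrite /Pn -yj.
move=> y /[dup] hy /qa_supp [j yj]; move: hy; rewrite yj qa_val => hj.
by apply/negPn; apply: contra hj => h; rewrite A2.
Qed.


Lemma SBq_eq : SBq S q = Aset Pn PzS.
Proof.
apply/seteqP; split => a /=.
  move=> [hB /traceE hT].
  have : Aset Pn PzB a by rewrite -Bq_eq.
  move=> [A1 A2]; split => // j /orP[hj|hj]; [exact: A2 | exact: hT].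
move=> [A1 A2]; split.
  have : Aset Pn PzB a.
    by split => // j hj; apply: A2; rewrite /PzS; rewrite /PzB in hj; rewrite hj.
  by rewrite -Bq_eq.
by apply/traceE => j hj; apply: A2; rewrite /PzS hj orbT.
Qed.

Lemma disB j : Pn j -> ~~ PzB j.
Proof. by move=> hj; rewrite /PzB negbK; have [] := ks_props hj. Qed.

Lemma disS j : Pn j -> ~~ PzS j.
Proof.
move=> hj; rewrite /PzS negb_or disB //=.
have [_ k0 _ _ kn] := ks_props hj.
by rewrite intrEge0 // ltW.
Qed.

Lemma card_grid (P : rat -> bool) n :
  (forall x, P x -> exists j : 'I_s, x = gpt j) -> is_card P n ->
  #|[pred j : 'I_s | P (gpt j)]| = n.
Proof.
move=> hP [w [uw mw <-]]; rewrite cardE -(size_map gpt); apply: size_eqmem.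
- by rewrite map_inj_uniq ?enum_uniq //; exact: gpt_inj.
- exact: uw.
move=> x; rewrite mw; apply/mapP/idP => [[j]|hx].
  by rewrite mem_enum inE => hj ->.
have [j xj] := hP x hx; exists j => //.
by rewrite mem_enum inE -xj.
Qed.

Lemma card_Pn : #|Pn| = size ks.
Proof.
rewrite -(@card_grid (fun x => x \in ks) (size ks)).
- by apply: eq_card => j.
- move=> x xk; have [_ x0 xK xA _] := ks_props xk.
  exact: on_grid x0 xK (inA_rnat xA).
by exists ks; split => //; exact: ks_uniq.
Qed.

Lemma card_FrB N : is_card (fun x => inInc ks x && (x <= K)) N ->
  #|Fr Pn PzB| = N.
Proof.
move=> hN; rewrite -(card_grid _ hN).
  apply: eq_card => j; rewrite !inE /Pn /PzB /inInc negbK gpt_le andbT.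
  by rewrite andbC.
move=> x /andP[/andP[xA _] xK].
exact: on_grid (inA_pos xA) xK (inA_rnat xA).
Qed.

Lemma card_FrS M : is_card (fun x => inInc ks x && ~~ (x \is a Num.nat)) M ->
  #|Fr Pn PzS| = M.
Proof.
move=> hM; rewrite -(card_grid _ hM).
  apply: eq_card => j; rewrite !inE /Pn /PzS /inInc negb_or negbK.
  rewrite intrEge0 ?(ltW (gpt_pos j)) //.
  by case: (gpt j \in ks); case: (inA ks _); rewrite ?andbF.
move=> x /andP[/andP[xA _] xn].
exact: on_grid (inA_pos xA) (inA_le xA xn) (inA_rnat xA).
Qed.

Lemma main_glue (N M : nat)
  (hN : is_card (fun x => inInc ks x && (x <= cK S q)) N)
  (hM : is_card (fun x => inInc ks x && ~~ (x \is a Num.nat)) M) :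
  let m := size ks in
  [/\ homeomorphic (Bq S q) (CstarC R m N),
      homeomorphic (SBq S q) (CstarC R m M),
      is_card (fun x => inA ks x && (x <= cK S q)) (m + N),
      is_card (fun x => inA ks x && ~~ (x \is a Num.nat)) (m + M)
    & ((m + M)%:R : rat) =
      \sum_(i < m) ((rden ks i.+1)%:R * nth 0 ks i
                    - (Num.floor ((rden ks i)%:R * nth 0 ks i))%:~R)].
Proof.
have hpos : forall k, k \in ks -> 0 < k by move=> k /ks_props[].
have c4 : is_card (fun x => inA ks x && ~~ (x \is a Num.nat)) (size ks + M).
  apply: is_card_addks ks_uniq _ _ hM.
    by move=> k /ks_props[_ _ _ -> ->].
  by move=> x; rewrite /inInc andbAC.
split.
- by rewrite Bq_eq -card_Pn -(card_FrB hN); exact: homeo_gen disB.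
- by rewrite SBq_eq -card_Pn -(card_FrS hM); exact: homeo_gen disS.
- apply: is_card_addks ks_uniq _ _ hN.
    by move=> k /ks_props[_ _ -> -> _].
  by move=> x; rewrite /inInc andbAC.
- exact: c4.
- by rewrite -(is_card_uniq (card_AnN hks_sorted hpos) c4) sum_formula.
Qed.
End Glue.


Unset Implicit Arguments.
Set Strict Implicit.

Theorem mainTheorem3 (R : realType) (S : seq rat) (q : rat -> Cplx R)
  (hq : expfactor_on S q)
  (ks : seq rat)
  (hks_sorted : sorted (fun x y => y < x) ks)
  (hks_levels : forall x, x \in ks <-> is_Level S q x)
  (N M : nat)
  (hN : is_card (fun x => inInc ks x && (x <= cK S q)) N)
  (hM : is_card (fun x => inInc ks x && ~~ (x \is a Num.nat)) M) :
  let m := size ks in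
  [/\ homeomorphic (Bq S q) (CstarC R m N),
      homeomorphic (SBq S q) (CstarC R m M),
      is_card (fun x => inA ks x && (x <= cK S q)) (m + N),
      is_card (fun x => inA ks x && ~~ (x \is a Num.nat)) (m + M)
    & ((m + M)%:R : rat) =
      \sum_(i < m) ((rden ks i.+1)%:R * nth 0 ks i
                    - (Num.floor ((rden ks i)%:R * nth 0 ks i))%:~R)].
Proof.
exact: main_glue.
Qed.
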